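(* Let $(\hat R,\hat F)$ satisfy conditions (i) and (ii), and assume moreover $q^2\neq1$. Let $\hat R(u):=\hat R+\frac{q-q^{-1}}{u^2-1}\,\mathrm{Id}$. Let $T(u)$ be an operator on $V$, depending on a parameter $u$, with entries in an associative algebra $\mathfrak A$, satisfying \[ \hat R_{12}(u/v)\,T_{\bar1}(u)\,T_{\bar2}(v)=T_{\bar1}(v)\,T_{\bar2}(u)\,\hat R_{12}(u/v) \] for all admissible $u,v$ (with $u^2\ne v^2$), in particular for $u=qv$. Then $S^{(2)}_{12}\,T_{\bar1}(qv)\,T_{\bar2}(v)\,A^{(2)}_{12}=0$. Consequently, if $\delta\in\mathfrak A$ is invertible, commutes with the scalars, and satisfies $\delta\,T(v)\,\delta^{-1}=T(q^{-1}v)$ entrywise for all $v$, then both $\delta\,T(v)$ and $T(v)\,\delta$ are half-quantum matrices, i.e. $S^{(2)}_{12}(\delta T)_{\bar1}(v)(\delta T)_{\bar2}(v)A^{(2)}_{12}=0$ and $S^{(2)}_{12}(T\delta)_{\bar1}(v)(T\delta)_{\bar2}(v)A^{(2)}_{12}=0$.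
   Context: Let $V$ be a finite-dimensional complex vector space, $\mathrm{Id}$ the identity. For an operator $X$ on $V$ (possibly with entries in $\mathfrak A$), $X_j$ denotes $X$ acting in the $j$-th tensor factor of $V^{\otimes m}$; for $Y$ on $V\otimes V$, $Y_{j,k}$ denotes $Y$ in factors $j,k$ and $Y_j:=Y_{j,j+1}$. Conditions on $q\in\mathbb C^*$, $\hat R,\hat F\in\mathrm{Aut}(V\otimes V)$: (i) $\hat R_{12}\hat R_{23}\hat R_{12}=\hat R_{23}\hat R_{12}\hat R_{23}$, $\hat F_{12}\hat F_{23}\hat F_{12}=\hat F_{23}\hat F_{12}\hat F_{23}$, $\hat R_{12}\hat F_{23}\hat F_{12}=\hat F_{23}\hat F_{12}\hat R_{23}$, $\hat F_{12}\hat F_{23}\hat R_{12}=\hat R_{23}\hat F_{12}\hat F_{23}$. (ii) $q+q^{-1}\ne0$ and $\hat R=qS^{(2)}-q^{-1}A^{(2)}$ with $S^{(2)},A^{(2)}$ idempotents, $S^{(2)}+A^{(2)}=\mathrm{Id}$. For an $\mathfrak A$-valued $N$ on $V$: $N_{\bar1}:=N_1$, $N_{\bar2}:=\hat F_{12}N_1\hat F_{12}^{-1}$. A half-quantum matrix is an $\mathfrak A$-valued $N$ with $S^{(2)}_{12}N_{\bar1}N_{\bar2}A^{(2)}_{12}=0$. *)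

(* Defs.v *)
From HB Require Import structures.
From mathcomp Require Import all_boot all_order all_algebra.
Set Implicit Arguments. Unset Strict Implicit. Unset Printing Implicit Defensive.
Import GRing.Theory Num.Theory.
Local Open Scope ring_scope.

(* V = C^n with its standard basis; V^{(x)2} and V^{(x)3} are indexed by
   pairs / triples of basis indices. *)
Definition op (R : Type) (I : finType) := I -> I -> R.

Section Ops.
Variable R : pzRingType.
Variable I : finType.

Definition opeq (X Y : op R I) : Prop := forall i j, X i j = Y i j.
Definition opmul (X Y : op R I) : op R I := fun i j => \sum_(k : I) X i k * Y k j.
Definition opone : op R I := fun i j => (i == j)%:R.
Definition opzero : op R I := fun _ _ => 0.
End Ops.

Notation "X ** Y" := (opmul X Y) (at level 40, left associativity).
Notation "X =op= Y" := (opeq X Y) (at level 70, no associativity).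

Notation I2 n := ('I_n * 'I_n)%type.
Notation I3 n := ('I_n * 'I_n * 'I_n)%type.

Section Tensor.
Variable R : pzRingType.
Variable n : nat.

(* X on V acting in the first factor of V (x) V *)
Definition in1 (X : op R 'I_n) : op R (I2 n) :=
  fun i j => X i.1 j.1 * (i.2 == j.2)%:R.
(* Y on V (x) V acting in factors 1,2 of V^{(x)3} *)
Definition in12 (Y : op R (I2 n)) : op R (I3 n) :=
  fun i j => Y (i.1.1, i.1.2) (j.1.1, j.1.2) * (i.2 == j.2)%:R.
(* Y on V (x) V acting in factors 2,3 of V^{(x)3} *)
Definition in23 (Y : op R (I2 n)) : op R (I3 n) :=
  fun i j => (i.1.1 == j.1.1)%:R * Y (i.1.2, i.2) (j.1.2, j.2).
End Tensor.

Definition liftA (C : pzRingType) (A : lalgType C) (I : finType) (X : op C I)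
  : op A I := fun i j => (X i j)%:A.

Definition inverse_op (R : pzRingType) (I : finType) (X Xi : op R I) : Prop :=
  X ** Xi =op= @opone R I /\ Xi ** X =op= @opone R I.

Definition cond_i (C : pzRingType) (n : nat) (Rh Fh : op C (I2 n)) : Prop :=
  [/\ in12 Rh ** in23 Rh ** in12 Rh =op= in23 Rh ** in12 Rh ** in23 Rh,
      in12 Fh ** in23 Fh ** in12 Fh =op= in23 Fh ** in12 Fh ** in23 Fh,
      in12 Rh ** in23 Fh ** in12 Fh =op= in23 Fh ** in12 Fh ** in23 Rh &
      in12 Fh ** in23 Fh ** in12 Rh =op= in23 Rh ** in12 Fh ** in23 Fh].

Definition cond_ii (C : fieldType) (n : nat) (q : C) (Rh S2 A2 : op C (I2 n))
  : Prop :=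
  [/\ q + q^-1 != 0,
      Rh =op= (fun i j => q * S2 i j - q^-1 * A2 i j),
      S2 ** S2 =op= S2,
      A2 ** A2 =op= A2 &
      (fun i j => S2 i j + A2 i j) =op= @opone C (I2 n)].

Definition bar1 (C : pzRingType) (A : lalgType C) (n : nat) (N : op A 'I_n)
  : op A (I2 n) := in1 N.
Definition bar2 (C : pzRingType) (A : lalgType C) (n : nat)
  (Fh Fhi : op C (I2 n)) (N : op A 'I_n) : op A (I2 n) :=
  liftA A Fh ** in1 N ** liftA A Fhi.

Definition half_quantum (C : pzRingType) (A : lalgType C) (n : nat)
  (S2 A2 Fh Fhi : op C (I2 n)) (N : op A 'I_n) : Prop :=
  liftA A S2 ** bar1 N ** bar2 Fh Fhi N ** liftA A A2 =op= @opzero A (I2 n).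

Definition Rspec (C : fieldType) (n : nat) (q : C) (Rh : op C (I2 n)) (u : C)
  : op C (I2 n) :=
  fun i j => Rh i j + (q - q^-1) / (u ^+ 2 - 1) * (i == j)%:R.

(* Main.v *)
Require Import Defs.
From HB Require Import structures.
From mathcomp Require Import all_boot all_order all_algebra.
From mathcomp Require Import ring.
From Stdlib Require Import FunctionalExtensionality.
Set Implicit Arguments. Unset Strict Implicit.
Import GRing.Theory Num.Theory.
Local Open Scope ring_scope.

Lemma opeqE (R : pzRingType) (I : finType) (X Y : op R I) : X =op= Y -> X = Y.
Proof. move=> H; apply: functional_extensionality => i; apply: functional_extensionality => j; exact: H. Qed.

Section OpLemmas.
Variable R : pzRingType.
Variable I : finType.
Implicit Types X Y Z : op R I.

Definition opL (d : R) X : op R I := fun i j => d * X i j.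
Definition opR X (d : R) : op R I := fun i j => X i j * d.

Lemma opmulA X Y Z : X ** Y ** Z = X ** (Y ** Z).
Proof.
apply: opeqE => i j; rewrite /opmul.
under eq_bigr do rewrite mulr_suml.
rewrite exchange_big; apply: eq_bigr => k _; rewrite mulr_sumr.
by apply: eq_bigr => l _; rewrite mulrA.
Qed.

Lemma opL_mull d X Y : opL d X ** Y = opL d (X ** Y).
Proof. apply: opeqE => i j; rewrite /opmul /opL mulr_sumr; apply: eq_bigr => k _; by rewrite mulrA. Qed.

Lemma opR_mulr d X Y : X ** opR Y d = opR (X ** Y) d.
Proof. apply: opeqE => i j; rewrite /opmul /opR mulr_suml; apply: eq_bigr => k _; by rewrite mulrA. Qed.

Lemma opRL d X Y : opR X d ** Y = X ** opL d Y.
Proof. apply: opeqE => i j; rewrite /opmul /opR /opL; apply: eq_bigr => k _; by rewrite mulrA. Qed.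

Lemma opLR_comm d X : (forall i j, d * X i j = X i j * d) -> opL d X = opR X d.
Proof. move=> H; apply: opeqE => i j; exact: H. Qed.

Lemma opL_comm d X Y : (forall i j, d * X i j = X i j * d) ->
  X ** opL d Y = opL d (X ** Y).
Proof.
move=> H; apply: opeqE => i j; rewrite /opmul /opL mulr_sumr; apply: eq_bigr => k _.
by rewrite mulrA -H mulrA.
Qed.

Lemma opL_opL d e X : opL d (opL e X) = opL (d * e) X.
Proof. apply: opeqE => i j; by rewrite /opL mulrA. Qed.

Lemma opmul0r X : X ** @opzero R I = @opzero R I.
Proof. apply: opeqE => i j; rewrite /opmul /opzero big1 // => k _; by rewrite mulr0. Qed.

Lemma opL0 d : opL d (@opzero R I) = @opzero R I.
Proof. apply: opeqE => i j; by rewrite /opL /opzero mulr0. Qed.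

Lemma opR0 d : opR (@opzero R I) d = @opzero R I.
Proof. apply: opeqE => i j; by rewrite /opR /opzero mul0r. Qed.

Lemma opmul1 X : X ** @opone R I = X.
Proof.
apply: opeqE => i j; rewrite /opmul /opone (bigD1 j) //= eqxx mulr1 big1 ?addr0 //.
by move=> k /negbTE ->; rewrite mulr0.
Qed.

Lemma opmulD X Y Z : X ** (fun i j => Y i j + Z i j) = fun i j => (X ** Y) i j + (X ** Z) i j.
Proof. apply: opeqE => i j; rewrite /opmul -big_split; apply: eq_bigr => k _; by rewrite mulrDr. Qed.
End OpLemmas.

Section AlgLemmas.
Variable C : pzRingType.
Variable A : lalgType C.
Variable I : finType.

Definition opS (c : C) (X : op A I) : op A I := fun i j => c *: X i j.

Lemma opS_mull c X Y : opS c X ** Y = opS c (X ** Y).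
Proof. apply: opeqE => i j; rewrite /opmul /opS scaler_sumr; apply: eq_bigr => k _; by rewrite scalerAl. Qed.
End AlgLemmas.

Section AlgLemmas2.
Variable C : comPzRingType.
Variable A : algType C.
Variable I : finType.

Lemma liftA_mul (X Y : op C I) : liftA A (X ** Y) = liftA A X ** liftA A Y.
Proof.
apply: opeqE => i j; rewrite /opmul /liftA scaler_suml; apply: eq_bigr => k _.
by rewrite -scalerAl mul1r scalerA.
Qed.

Lemma liftA0 : liftA A (@opzero C I) = @opzero A I.
Proof. apply: opeqE => i j; by rewrite /liftA /opzero scale0r. Qed.

Lemma liftA_scale (c : C) (X : op C I) : liftA A (fun i j => c * X i j) = opS c (liftA A X).
Proof. apply: opeqE => i j; by rewrite /liftA /opS scalerA. Qed.

Lemma opS_mulr c (X Y : op A I) : X ** opS c Y = opS c (X ** Y).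
Proof. apply: opeqE => i j; rewrite /opmul /opS scaler_sumr; apply: eq_bigr => k _; by rewrite scalerAr. Qed.
End AlgLemmas2.

Theorem mainTheorem9 (C : numClosedFieldType) (n : nat) (q : C)
  (Rh Rhi Fh Fhi S2 A2 : op C (I2 n))
  (Alg : algType C) (T : C -> op Alg 'I_n) :
  q != 0 ->
  inverse_op Rh Rhi -> inverse_op Fh Fhi ->
  cond_i Rh Fh ->
  cond_ii q Rh S2 A2 ->
  q ^+ 2 != 1 ->
  (forall u v : C, u != 0 -> v != 0 -> u ^+ 2 != v ^+ 2 ->
     liftA Alg (Rspec q Rh (u / v)) ** bar1 (T u) ** bar2 Fh Fhi (T v)
     =op= bar1 (T v) ** bar2 Fh Fhi (T u) ** liftA Alg (Rspec q Rh (u / v))) ->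
  (forall v : C, v != 0 ->
     liftA Alg S2 ** bar1 (T (q * v)) ** bar2 Fh Fhi (T v) ** liftA Alg A2
     =op= @opzero Alg (I2 n))
  /\
  (forall d di : Alg, d * di = 1 -> di * d = 1 ->
     (forall c : C, d * c%:A = c%:A * d) ->
     (forall v : C, v != 0 -> forall i j, d * T v i j * di = T (q^-1 * v) i j) ->
     forall v : C, v != 0 ->
       half_quantum S2 A2 Fh Fhi (fun i j => d * T v i j) /\
       half_quantum S2 A2 Fh Fhi (fun i j => T v i j * d)).
Proof.
move=> q0 _ _ _ [qq0 RhE SS AA SA1] q21 HR.
have SA0 : S2 ** A2 = @opzero C (I2 n).
  have h : S2 ** (fun i j => S2 i j + A2 i j) = S2 by rewrite (opeqE SA1) opmul1.
  rewrite opmulD (opeqE SS) in h.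
  apply: opeqE => i j; have := congr1 (fun f => f i j) h => /= /eqP.
  by rewrite -subr_eq0 addrC addKr => /eqP ->.
have part1 : forall v : C, v != 0 ->
     liftA Alg S2 ** bar1 (T (q * v)) ** bar2 Fh Fhi (T v) ** liftA Alg A2
     = @opzero Alg (I2 n).
  move=> v v0.
  have qv0 : q * v != 0 by rewrite mulf_neq0.
  have hq : (q * v) ^+ 2 != v ^+ 2.
    rewrite exprMn; apply/negP => /eqP h.
    have : (q ^+ 2 - 1) * v ^+ 2 = 0 by rewrite mulrBl mul1r h subrr.
    by move/eqP; rewrite mulf_eq0 subr_eq0 (negbTE q21) expf_eq0 (negbTE v0) andbF.
  have H := opeqE (HR _ _ qv0 v0 hq).
  have RE : Rspec q Rh (q * v / v) = fun i j => (q + q^-1) * S2 i j.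
    apply: opeqE => i j; rewrite /Rspec mulfK // (opeqE RhE).
    have -> : (i == j)%:R = S2 i j + A2 i j by have := SA1 i j.
    have -> : (q - q^-1) / (q ^+ 2 - 1) = q^-1.
      by field; rewrite q0 subr_eq0.
    by field.
  rewrite RE liftA_scale !opS_mull opS_mulr in H.
  have H2 := congr1 (fun Z => Z ** liftA Alg A2) H; simpl in H2.
  rewrite !opS_mull (opmulA _ (liftA Alg S2)) -liftA_mul SA0 liftA0 opmul0r in H2.
  apply: opeqE => i j; have := congr1 (fun f => f i j) H2.
  rewrite /opS /opzero => h.
  have := congr1 (fun z => (q + q^-1)^-1 *: z) h.
  by rewrite scalerA mulVf // scale1r !scaler0.
split; first by move=> v v0; rewrite part1.
move=> d di ddi did dc dT v v0.
have qv0 : q * v != 0 by rewrite mulf_neq0.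
have Tc : forall i j, T v i j * d = d * T (q * v) i j.
  move=> i j; have := dT _ qv0 i j; rewrite mulKf // => <-.
  by rewrite -mulrA did mulr1.
have liftc : forall (X : op C (I2 n)) i j, d * liftA Alg X i j = liftA Alg X i j * d.
  by move=> X i j; rewrite /liftA dc.
have natc : forall (b : bool) (x : Alg), x * b%:R = b%:R * x.
  by move=> b x; rewrite (commr_nat x b) .
have b1L : forall N : op Alg 'I_n, bar1 (fun i j => d * N i j) = opL d (bar1 N).
  by move=> N; apply: opeqE => i j; rewrite /bar1 /in1 /opL mulrA.
have b1R : forall N : op Alg 'I_n, bar1 (fun i j => N i j * d) = opR (bar1 N) d.
  by move=> N; apply: opeqE => i j; rewrite /bar1 /in1 /opR -!mulrA natc.
have b1T : opR (bar1 (T v)) d = opL d (bar1 (T (q * v))).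
  by apply: opeqE => i j; rewrite /bar1 /in1 /opR /opL -mulrA -natc mulrA Tc mulrA.
have b2L : forall N : op Alg 'I_n, bar2 Fh Fhi (fun i j => d * N i j) = opL d (bar2 Fh Fhi N).
  move=> N; rewrite /bar2.
  have -> : in1 (fun i j => d * N i j) = opL d (in1 N) by exact: b1L.
  by rewrite (opL_comm _ (liftc Fh)) opL_mull.
have b2R : forall N : op Alg 'I_n, bar2 Fh Fhi (fun i j => N i j * d) = opR (bar2 Fh Fhi N) d.
  move=> N; rewrite /bar2.
  have -> : in1 (fun i j => N i j * d) = opR (in1 N) d by exact: b1R.
  by rewrite opR_mulr opRL (opLR_comm (liftc Fhi)) opR_mulr.
have P1 := part1 _ v0.
split; rewrite /half_quantum.
- rewrite b1L b2L (opL_comm _ (liftc S2)) opL_mull.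
  rewrite -opRL -opR_mulr b1T (opL_comm _ (liftc S2)) !opL_mull opL_opL P1 opL0.
  by [].
- rewrite b1R b2R opR_mulr opRL.
  rewrite b1T (opL_comm _ (liftc S2)) (opLR_comm (liftc A2)) opR_mulr !opL_mull P1 opL0 opR0.
  by [].
Qed.
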